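(* Let $\mathfrak{G}$ be a non-redundant assembly graph and $\mathfrak{C}=\mathrm{CPC}(\mathfrak{G})$. Then the following finite strings are conductors for $\mathfrak{C}$: (i) any superstring of a conductor for $\mathfrak{C}$; (ii) any vertex, edge, or walk label in $\mathfrak{G}$; (iii) any string that is not a substring of $\mathfrak{C}$; (iv) any string that is at least as long as the longest edge label in $\mathfrak{G}$.
   Context: All strings are over a fixed finite alphabet $\Sigma$. A cyclic string is a bi-infinite periodic word $\mathbb{Z}\to\Sigma$, considered up to shifting indices; for a nonempty finite string $x$, $\langle x\rangle$ is the cyclic string repeating $x$ in both directions. A chromosome-set is a set of cyclic strings; a finite string is a substring of a chromosome-set if it is a contiguous block of one of its elements. A string $u$ is a proper infix of $w$ if $w=aub$ with $a,b$ nonempty. An abstract assembly graph is a finite directed multigraph in which each vertex and edge carries a label (a finite or cyclic string) such that for every edge $e$ from $u$ to $v$, $Label(u)$ is a prefix and $Label(v)$ a suffix of $Label(e)$. An edge $e$ from $u$ to $v$ is a prefix edge if $Label(e)=Label(v)$, a suffix edge if $Label(e)=Label(u)$. An assembly graph is an abstract assembly graph in which every vertex and edge lies on a directed cycle and no edge is both a prefix and a suffix edge. The label of a walk $v_0,e_1,\dots,e_n,v_n$ is $Label(e_1)$ followed, for $i\ge 2$, by $Label(e_i)$ with its first $|Label(v_{i-1})|$ characters removed; a walk with no edges has its vertex label. A circuit is a primitive closed walk up to rotation; if its walk label is $Label(v_0)x$, its label is $\langle x\rangle$. $\mathrm{CPC}(\mathfrak{G})$ is the set of circuit labels of $\mathfrak{G}$.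 $P$ is an inner subwalk of $Q$ if $Q=APB$ with walks $A,B$ each having at least one edge. The graph is non-redundant if whenever $Label(P)$ is a proper infix of $Label(Q)$ for walks $P,Q$, $P$ is an inner subwalk of $Q$. A finite string $v$ is a conductor for a chromosome-set $\mathfrak{C}$ if for all nonempty finite strings $a,b$ such that $va$ and $vb$ both end with $v$ (i.e. $va=a'v$, $vb=b'v$ for some $a',b'$), we have $\langle ab\rangle\in\mathfrak{C}$ if and only if $\langle a\rangle\in\mathfrak{C}$ and $\langle b\rangle\in\mathfrak{C}$. *)

(* Defs.v *)
From HB Require Import structures.
From mathcomp Require Import all_boot all_order all_algebra.
Set Implicit Arguments. Unset Strict Implicit. Unset Printing Implicit Defensive.
Import GRing.Theory Num.Theory.

(* A cyclic string is a bi-infinite word int -> S considered up to shift.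
   A chromosome-set is a predicate on bi-infinite words; membership of a
   cyclic string is always tested up to shift (see [cmem]). *)

Definition is_cyc (S : Type) (c : int -> S) (x : seq S) : Prop :=
  (0 < size x)%N /\
  exists k : int, forall i : int,
    c (i + k)%R = nth (c 0%R) x (absz (i %% (size x)%:Z)%Z).

Definition cmem (S : Type) (C : (int -> S) -> Prop) (x : seq S) : Prop :=
  exists c, C c /\ is_cyc c x.

Definition substr_of (S : Type) (C : (int -> S) -> Prop) (s : seq S) : Prop :=
  exists c, C c /\ exists i : int, forall j : nat, (j < size s)%N ->
    c (i + j%:Z)%R = nth (c 0%R) s j.

Definition conductor (S : eqType) (C : (int -> S) -> Prop) (v : seq S) : Prop :=
  forall a b : seq S, a != [::] -> b != [::] ->
    (exists a', v ++ a = a' ++ v) -> (exists b', v ++ b = b' ++ v) ->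
    (cmem C (a ++ b) <-> (cmem C a /\ cmem C b)).

Record lgraph (S : Type) := LGraph {
  gV : finType;
  gE : finType;
  gsrc : gE -> gV;
  gtgt : gE -> gV;
  vlab : gV -> seq S;
  elab : gE -> seq S }.

Section Graphs.
Variables (S : eqType) (G : lgraph S).

(* a walk v0, e1, ..., en is given by its start vertex and its edge sequence *)
Fixpoint walk_ok (v : gV G) (es : seq (gE G)) : bool :=
  match es with
  | [::] => true
  | e :: es' => (gsrc e == v) && walk_ok (gtgt e) es'
  end.

Definition wend (v : gV G) (es : seq (gE G)) : gV G :=
  last v [seq gtgt e | e <- es].

Definition wlabel (v : gV G) (es : seq (gE G)) : seq S :=
  match es with
  | [::] => vlab v
  | e :: es' => elab e ++ flatten [seq drop (size (vlab (gsrc f))) (elab f) | f <- es']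
  end.

Definition closed_walk (v : gV G) (es : seq (gE G)) : Prop :=
  es != [::] /\ walk_ok v es /\ wend v es = v.

Definition abstract_assembly_graph : Prop :=
  forall e : gE G, prefix (vlab (gsrc e)) (elab e) /\ suffix (vlab (gtgt e)) (elab e).

Definition prefix_edge (e : gE G) : Prop := elab e = vlab (gtgt e).
Definition suffix_edge (e : gE G) : Prop := elab e = vlab (gsrc e).

Definition assembly_graph : Prop :=
  abstract_assembly_graph /\
  (forall v : gV G, exists es, closed_walk v es) /\
  (forall e : gE G, exists v es, closed_walk v es /\ e \in es) /\
  (forall e : gE G, ~ (prefix_edge e /\ suffix_edge e)).

Definition primitive_seq (T : Type) (s : seq T) : Prop :=
  forall (k : nat) (t : seq T), flatten (nseq k t) = s -> (k <= 1)%N.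

Definition circuit (v : gV G) (es : seq (gE G)) : Prop :=
  closed_walk v es /\ primitive_seq es.

Definition CPC : (int -> S) -> Prop :=
  fun c => exists v es x, circuit v es /\ wlabel v es = vlab v ++ x /\ is_cyc c x.

Definition inner_subwalk (p : gV G) (ps : seq (gE G)) (q : gV G) (qs : seq (gE G)) : Prop :=
  exists as_ bs, as_ != [::] /\ bs != [::] /\ qs = as_ ++ ps ++ bs /\ wend q as_ = p.

Definition proper_infix (u w : seq S) : Prop :=
  exists a b, a != [::] /\ b != [::] /\ w = a ++ u ++ b.

Definition non_redundant : Prop :=
  forall p ps q qs, walk_ok p ps -> walk_ok q qs ->
    proper_infix (wlabel p ps) (wlabel q qs) -> inner_subwalk p ps q qs.

Definition max_edge_label : nat := \max_(e : gE G) size (elab e).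

End Graphs.

(* Main.v *)
Require Import Defs.
From mathcomp Require Import all_boot all_order all_algebra.
From mathcomp Require Import zify.
From Stdlib Require Import Classical.
Set Implicit Arguments. Unset Strict Implicit. Unset Printing Implicit Defensive.
Import GRing.Theory Num.Theory.

Notation pw t n := (flatten (nseq n t)).

Section Strings.
Variable S : eqType.
Implicit Types (s t u v w x y z : seq S).

Lemma catLI s s2 s3 : s ++ s2 = s ++ s3 -> s2 = s3.
Proof. by move/(congr1 (drop (size s))); rewrite !drop_size_cat. Qed.

Lemma catE2 s1 s2 s3 s4 : s1 ++ s3 = s2 ++ s4 -> size s1 = size s2 -> s1 = s2 /\ s3 = s4.
Proof. by move=> E H; move/eqP: E; rewrite eqseq_cat // => /andP[/eqP ? /eqP ?]. Qed.

Lemma catE2r s1 s2 s3 s4 : s1 ++ s3 = s2 ++ s4 -> size s3 = size s4 -> s1 = s2 /\ s3 = s4.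
Proof.
move=> E H; apply: catE2 => //; have := congr1 size E; rewrite !size_cat H; lia.
Qed.

Lemma catsplit s1 s2 t1 t2 : s1 ++ s2 = t1 ++ t2 -> size s1 <= size t1 ->
  exists r, t1 = s1 ++ r /\ s2 = r ++ t2.
Proof.
move=> E le; have Ht: take (size s1) t1 = s1 by rewrite -(takel_cat t2 le) -E take_size_cat.
exists (drop (size s1) t1); split; first by rewrite -{1}(cat_take_drop (size s1) t1) Ht.
apply: (@catLI s1); rewrite E catA -{1}Ht cat_take_drop //.
Qed.

Lemma pwSr t n : pw t n.+1 = pw t n ++ t.
Proof. elim: n => [|n IH]; first by rewrite /= cats0. by rewrite /= -catA -IH. Qed.

Lemma size_pw t n : size (pw t n) = n * size t.
Proof. by elim: n => //= n IH; rewrite size_cat IH mulSn. Qed.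

Lemma pw_add t a b : pw t (a + b) = pw t a ++ pw t b.
Proof. by elim: a => //= a IH; rewrite IH catA. Qed.

Lemma pw_mul t k m : pw (pw t k) m = pw t (m * k).
Proof. by elim: m => //= m IH; rewrite IH mulSn pw_add. Qed.

Lemma nth_pw d t n i : i < n * size t -> nth d (pw t n) i = nth d t (i %% size t).
Proof.
elim: n i => [|n IH] i //=; rewrite mulSn => lt; rewrite nth_cat.
case: ltnP => h; first by rewrite modn_small.
rewrite IH; last by lia.
by rewrite -{2}(subnKC h) modnDl.
Qed.

Lemma conj_pw u v z n : u ++ z = z ++ v -> pw u n ++ z = z ++ pw v n.
Proof. move=> E; elim: n => [|n IH] /=; first by rewrite cats0. by rewrite -catA IH catA E -catA. Qed.

Lemma suffix_pw w y y' : w ++ y = y' ++ w -> 0 < size y ->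
  exists g, pw y (size w) = g ++ w.
Proof.
move=> E hy.
have E2 := conj_pw (size w) (esym E).
have sy : size y' = size y by have := congr1 size E; rewrite !size_cat; lia.
set Y := pw y (size w) in E2 *.
have hY : size w <= size Y by rewrite /Y size_pw; nia.
exists (take (size Y - size w) Y).
have E3 : pw y' (size w) ++ w = (w ++ take (size Y - size w) Y) ++ drop (size Y - size w) Y.
  by rewrite E2 -catA cat_take_drop.
have hs : size w = size (drop (size Y - size w) Y) by rewrite size_drop; lia.
have [_ E4] := catE2r E3 hs.
by rewrite -{1}(cat_take_drop (size Y - size w) Y) -E4.
Qed.

Lemma pw_pos t n : 0 < n -> 0 < size t -> 0 < size (pw t n).
Proof. by rewrite size_pw => *; rewrite muln_gt0; apply/andP. Qed.

Definition per (d : S) x (i : int) : S := nth d x (absz (i %% (Posz (size x)))%Z).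

Lemma absmod (i : int) (L : nat) : 0 < L ->
  (absz (i %% (Posz L))%Z < L)%N /\ Posz (absz (i %% (Posz L))%Z) = (i %% (Posz L))%Z.
Proof.
move=> hL; have h0 : (0 <= (i %% (Posz L))%Z)%R by apply: modz_ge0; rewrite eqz_nat; lia.
have h1 : ((i %% (Posz L))%Z < (Posz L))%R by apply: ltz_pmod; rewrite ltz_nat.
rewrite gez0_abs //; split => //; rewrite -ltz_nat gez0_abs //.
Qed.

Lemma per_d d d' x i : 0 < size x -> per d x i = per d' x i.
Proof. by move=> h; rewrite /per; apply: set_nth_default; case: (absmod i h). Qed.

Lemma per_nat d x (j : nat) : per d x (Posz j) = nth d x (j %% size x).
Proof. by rewrite /per modz_nat absz_nat. Qed.

Lemma per_addn d x (K : int) (j : nat) : 0 < size x ->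
  per d x (K + (Posz j))%R = nth d x ((absz (K %% (Posz (size x)))%Z + j) %% size x).
Proof.
move=> h; rewrite /per; congr nth.
case: (absmod K h) => _ E.
by rewrite -modzDml -E -PoszD modz_nat absz_nat.
Qed.

Lemma per_pw d t k i : 0 < k -> 0 < size t -> per d (pw t k) i = per d t i.
Proof.
move=> hk ht; rewrite /per size_pw.
have hkt : 0 < k * size t by rewrite muln_gt0 hk.
case: (absmod i hkt) => lt E.
rewrite nth_pw // -[(_ %% size t)%N]absz_nat -modz_nat E.
rewrite {2}(divz_eq i (Posz (k * size t))) PoszM mulrA modzMDl //.
Qed.

Definition shiftrel x y := exists m : int, forall d i, per d x (i + m)%R = per d y i.

Lemma shiftrel_sym x y : shiftrel x y -> shiftrel y x.
Proof. by case=> m H; exists (- m)%R => d i; rewrite -H subrK. Qed.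

Lemma shiftrel_trans x y z : shiftrel x y -> shiftrel y z -> shiftrel x z.
Proof. by case=> m1 H1 [m2 H2]; exists (m2 + m1)%R => d i; rewrite addrA H1 H2. Qed.

Lemma shiftrel_pw t k : 0 < k -> 0 < size t -> shiftrel (pw t k) t.
Proof. by move=> hk ht; exists 0%R => d i; rewrite addr0 per_pw. Qed.

Lemma conj_nth d u v z r : u ++ z = z ++ v -> r < size v ->
  nth d u ((r + size z) %% size u) = nth d v r.
Proof.
move=> E hr.
have su : size u = size v by have := congr1 size E; rewrite !size_cat; lia.
have E2 := conj_pw (size z).+1 E.
have H : nth d (pw u (size z).+1 ++ z) (size z + r) = nth d (z ++ pw v (size z).+1) (size z + r) by rewrite E2.
rewrite nth_cat size_pw ifT in H; last by rewrite su; nia.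
rewrite nth_pw in H; last by rewrite su; nia.
rewrite nth_cat ifF ?addKn in H; last by lia. rewrite nth_pw in H; last by nia.
by rewrite addnC H modn_small.
Qed.

Lemma conj_shift u v z : u ++ z = z ++ v -> 0 < size u -> shiftrel u v.
Proof.
move=> E hu.
have su : size u = size v by have := congr1 size E; rewrite !size_cat; lia.
exists (Posz (size z)) => d i.
rewrite per_addn //.
rewrite /per -su; apply: conj_nth => //; rewrite -su; case: (absmod i hu) => //.
Qed.

Lemma cmem_shift (C : (int -> S) -> Prop) x y : 0 < size y -> shiftrel x y -> cmem C x -> cmem C y.
Proof.
move=> hy [m H] [c [Cc [hx [k Hk]]]]; exists c; split => //; split => //.
exists (m + k)%R => i; rewrite addrA Hk; exact: H.
Qed.


Lemma pw_nil k : pw ([::] : seq S) k = [::].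
Proof. by elim: k. Qed.

Lemma WIN (c : int -> S) d x (k : int) s (i0 : int) : 0 < size x ->
  (forall i, c (i + k)%R = per d x i) ->
  (forall j, j < size s -> c (i0 + Posz j)%R = nth d s j) ->
  exists A B N, [/\ A != [::], B != [::] & pw x N = A ++ s ++ B].
Proof.
move=> hx Hk Hs.
set L := size x; set K := (i0 - k)%R; set r := absz (K %% Posz L)%Z; set m := r + L.
set N := m + size s + 1.
have HN : N <= N * L by rewrite leq_pmulr.
have Hs2 : forall j, j < size s -> nth d s j = nth d (pw x N) (m + j).
  move=> j hj; rewrite -Hs //.
  have -> : (i0 + Posz j = (K + Posz j) + k)%R by rewrite /K; lia.
  rewrite Hk per_addn // nth_pw; last by rewrite -/L; lia.
  by rewrite /m addnAC modnDr.
set P := pw x N.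
have sP : size P = N * L by rewrite /P size_pw.
exists (take m P), (drop (m + size s) P), N; split.
- by rewrite -size_eq0 -lt0n size_takel; rewrite ?sP; lia.
- by rewrite -size_eq0 -lt0n size_drop sP; lia.
have Es : s = take (size s) (drop m P).
  apply: (@eq_from_nth _ d) => [|j hj]; first by rewrite size_takel // size_drop sP; lia.
  by rewrite nth_take // nth_drop -Hs2.
rewrite addnC -drop_drop; transitivity (take m P ++ drop m P); first by rewrite cat_take_drop.
congr (_ ++ _); by rewrite -{1}(cat_take_drop (size s) (drop m P)) -Es.
Qed.

End Strings.

Lemma root_ex (T : eqType) (s : seq T) : s != [::] ->
  exists t k, [/\ 0 < k, s = pw t k, primitive_seq t & t != [::]].
Proof.
have [n] := ubnP (size s); elim: n s => // n IH s Hn Hs.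
case: (classic (exists k t, pw t k = s /\ 1 < k)) => [[k [t [E Hk]]] | N].
  have Ht : t != [::].
    apply/eqP => Et; move: Hs; rewrite -E Et.
    by elim: k {Hk E} => //.
  have st : size t < n.
    have : size s = k * size t by rewrite -E size_pw.
    have : 0 < size t by rewrite lt0n size_eq0.
    nia.
  have [t0 [k0 [Hk0 Et Hp Ht0]]] := IH t st Ht.
  exists t0, (k * k0); split => //.
  - by rewrite muln_gt0 Hk0 andbT; lia.
  - by rewrite -E Et pw_mul.
exists s, 1; split => //; first by rewrite /= cats0.
move=> k t E; rewrite leqNgt; apply/negP => Hk; apply: N; by exists k, t.
Qed.

Section Graph.
Variables (S : eqType) (G : lgraph S).
Hypothesis AG : abstract_assembly_graph G.
Implicit Types (v p q : gV G) (e : gE G) (s es t qs ps : seq (gE G)).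

Definition preE (e : gE G) := take (size (elab e) - size (vlab (gtgt e))) (elab e).
Definition postE (e : gE G) := drop (size (vlab (gsrc e))) (elab e).
Definition pre (es : seq (gE G)) := flatten (map preE es).
Definition post (es : seq (gE G)) := flatten (map postE es).

Lemma edge_src e : elab e = vlab (gsrc e) ++ postE e.
Proof. by case: (AG e) => /prefixP[r E] _; rewrite /postE E drop_size_cat. Qed.

Lemma edge_tgt e : elab e = preE e ++ vlab (gtgt e).
Proof.
case: (AG e) => _ /suffixP[r E]; rewrite /preE {2 3}E size_cat addnK take_size_cat //.
Qed.

Lemma pre_cat (s1 s2 : seq (gE G)) : pre (s1 ++ s2) = pre s1 ++ pre s2.
Proof. by rewrite /pre map_cat flatten_cat. Qed.
Lemma post_cat (s1 s2 : seq (gE G)) : post (s1 ++ s2) = post s1 ++ post s2.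
Proof. by rewrite /post map_cat flatten_cat. Qed.
Lemma pre_pw t k : pre (pw t k) = pw (pre t) k.
Proof. by elim: k => //= k IH; rewrite pre_cat IH. Qed.
Lemma post_pw t k : post (pw t k) = pw (post t) k.
Proof. by elim: k => //= k IH; rewrite post_cat IH. Qed.

Lemma walk_cat v (s1 s2 : seq (gE G)) : walk_ok v (s1 ++ s2) = walk_ok v s1 && walk_ok (wend v s1) s2.
Proof. by elim: s1 v => //= e s1 IH v; rewrite IH andbA. Qed.

Lemma wend_cat v (s1 s2 : seq (gE G)) : wend v (s1 ++ s2) = wend (wend v s1) s2.
Proof. by rewrite /wend map_cat last_cat. Qed.

Lemma L0 v es : walk_ok v es -> wlabel v es = vlab v ++ post es.
Proof.
case: es => [|e es] /=; first by rewrite cats0.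
by case/andP => /eqP <- _; rewrite catA -edge_src.
Qed.

Lemma L1 v es : walk_ok v es -> vlab v ++ post es = pre es ++ vlab (wend v es).
Proof.
elim: es v => [|e es IH] v /=; first by rewrite cats0.
case/andP => /eqP <- H; rewrite catA -edge_src edge_tgt -catA IH //.
by rewrite catA.
Qed.

Lemma Lcons v e es : walk_ok v (e :: es) ->
  vlab v ++ post (e :: es) = preE e ++ (vlab (gtgt e) ++ post es).
Proof. by case/andP => /eqP <- _; rewrite /post /= -/(post es) catA -edge_src edge_tgt catA. Qed.

Lemma closed_pw p t n : walk_ok p t -> wend p t = p -> walk_ok p (pw t n) /\ wend p (pw t n) = p.
Proof.
move=> H1 H2; elim: n => [|n [IH1 IH2]] //=.
by rewrite walk_cat wend_cat H2 H1 IH1 IH2.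
Qed.

Lemma root_closed p t k : t != [::] -> 0 < k -> walk_ok p (pw t k) -> wend p (pw t k) = p ->
  walk_ok p t /\ wend p t = p.
Proof.
move=> nt; case: k => // k _.
rewrite [pw t k.+1]/= walk_cat wend_cat => /andP[H1 H2] E.
split => //.
case: k H2 E => [|k] H2 E; first by exact: E.
move: H2; rewrite [pw t k.+1]/=.
case: t nt H1 {E} => // e t _ /= /andP[/eqP E1 _] /andP[/eqP E2 _].
by rewrite -E1 E2.
Qed.

Lemma post_rcons (s : seq (gE G)) e : post (rcons s e) = post s ++ postE e.
Proof. by rewrite -cats1 post_cat /post /= cats0. Qed.

Hypothesis NR : non_redundant G.

Lemma PL qs q (A B : seq S) p ps : walk_ok q qs -> walk_ok p ps -> A != [::] -> B != [::] ->
  vlab q ++ post qs = A ++ (vlab p ++ post ps) ++ B ->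
  exists as_ bs, [/\ qs = as_ ++ ps ++ bs, wend q as_ = p & pre as_ = A].
Proof.
move=> + Hp; have [n] := ubnP (size qs); elim: n qs q A B => // n IH qs q A B Hn Hq HA HB E.
have [[e [qs' [Eq Hlt]]] | H1] : (exists e qs', qs = e :: qs' /\ size (preE e) < size A) \/
    (forall e qs', qs = e :: qs' -> size A <= size (preE e)).
  case: qs {Hn Hq E} => [|e qs']; first by right.
  case: (ltnP (size (preE e)) (size A)) => h; first by left; exists e, qs'.
  by right => e' q' [<- _].
  subst qs; rewrite Lcons // in E.
  have [r [EA Er]] := catsplit E (ltnW Hlt).
  have Hr : r != [::] by apply/eqP => Er0; move: Hlt; rewrite EA Er0 cats0 ltnn.
  move: Hq => /andP[_ Hq'].
  have [as' [bs [E1 E2 E3]]] := IH qs' (gtgt e) r B Hn Hq' Hr HB Er.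
  exists (e :: as'), bs; split => //; first by rewrite E1.
  by rewrite /pre /= -/(pre as') E3 EA.
have [[qs' [e [Eq Hlt]]] | H2] : (exists qs' e, qs = rcons qs' e /\ size (postE e) < size B) \/
    (forall qs' e, qs = rcons qs' e -> size B <= size (postE e)).
  case/lastP: qs {Hn Hq E H1} => [|qs' e]; first by right => qs' e; case: qs'.
  case: (ltnP (size (postE e)) (size B)) => h; first by left; exists qs', e.
  by right => q' e' /eqP; rewrite eqseq_rcons => /andP[_ /eqP <-].
  subst qs.
  have E' : (vlab q ++ post qs') ++ postE e = (A ++ (vlab p ++ post ps)) ++ B.
    by rewrite -catA -post_rcons E catA.
  have hs := congr1 size E'; rewrite !size_cat in hs.
  have le : size (A ++ (vlab p ++ post ps)) <= size (vlab q ++ post qs') by rewrite !size_cat; lia.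
  have [r [Er EB]] := catsplit (esym E') le.
  have Hr : r != [::] by apply/eqP => Er0; move: Hlt; rewrite EB Er0 /= ltnn.
  move: Hq; rewrite -cats1 walk_cat => /andP[Hq' _].
  have Hn' : size qs' < n by move: Hn; rewrite size_rcons.
  have [as' [bs [E1 E2 E3]]] := IH qs' q A r Hn' Hq' HA Hr (etrans Er (esym (catA _ _ _))).
  by exists as', (rcons bs e); split => //; rewrite E1 -!catA cats1.
have HPQ : proper_infix (wlabel p ps) (wlabel q qs).
  by exists A, B; split => //; rewrite !L0.
have [as_ [bs [Ha [Hb [Eq Hw]]]]] := NR Hp Hq HPQ.
have Hqa : walk_ok q as_ by move: Hq; rewrite Eq walk_cat => /andP[].
have E2 : pre as_ ++ (vlab p ++ post ps) ++ post bs = A ++ (vlab p ++ post ps) ++ B.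
  by rewrite -E Eq !post_cat [in RHS]catA (L1 Hqa) Hw -!catA.
have l1 : size A <= size (pre as_).
  case: as_ Ha Eq {Hw E2 Hqa} => // a1 as' _ Eq.
  by apply: (leq_trans (H1 _ _ Eq)); rewrite /pre /= size_cat leq_addr.
have l2 : size B <= size (post bs).
  case/lastP: bs Hb Eq {E2} => // bs' b1 _ Eq.
  have Eq2 : qs = rcons (as_ ++ ps ++ bs') b1 by rewrite Eq !rcons_cat.
  have := H2 _ _ Eq2.
  by move/leq_trans; apply; rewrite post_rcons size_cat leq_addl.
have hs := congr1 size E2; rewrite !size_cat in hs.
have hsz : size (pre as_) = size A by lia.
have [E3 _] := catE2 E2 hsz.
by exists as_, bs; split.
Qed.

Lemma prefix_cmp (T : Type) (x y qs : seq T) : x = take (size x) qs -> y = take (size y) qs ->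
  size x <= size y -> y = x ++ drop (size x) y.
Proof.
move=> Ex Ey le; rewrite -{1}(cat_take_drop (size x) y); congr (_ ++ _).
by rewrite Ey take_takel // Ex.
Qed.

Lemma EX q qs p ps (A B a a' : seq S) : walk_ok q qs -> walk_ok p ps -> A != [::] -> B != [::] ->
  a != [::] -> (vlab p ++ post ps) ++ a = a' ++ (vlab p ++ post ps) ->
  vlab q ++ post qs = A ++ (vlab p ++ post ps) ++ a ++ B ->
  exists D, [/\ D != [::], walk_ok p D, wend p D = p & pre D = a'].
Proof.
set w := vlab p ++ post ps => Hq Hp HA HB Ha Ea E.
have sa : size a' = size a by have := congr1 size Ea; rewrite !size_cat; lia.
have haB : a ++ B != [::] by move: Ha; rewrite -!size_eq0 size_cat; lia.
have [as1 [bs1 [E1 W1 P1]]] := PL Hq Hp HA haB E.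
have E' : vlab q ++ post qs = (A ++ a') ++ w ++ B.
  by rewrite E -catA; congr (_ ++ _); rewrite catA Ea -catA.
have HA' : A ++ a' != [::] by move: HA; rewrite -!size_eq0 size_cat; lia.
have [as2 [bs2 [E2 W2 P2]]] := PL Hq Hp HA' HB E'.
have T1 : as1 = take (size as1) qs by rewrite E1 take_size_cat.
have T2 : as2 = take (size as2) qs by rewrite E2 take_size_cat.
have lt : size as1 <= size as2.
  rewrite leqNgt; apply/negP => /ltnW le.
  have := prefix_cmp T2 T1 le => /(congr1 pre); rewrite pre_cat P1 P2 -catA => /(congr1 size).
  rewrite !size_cat; move: Ha; rewrite -size_eq0 -sa; lia.
have E12 := prefix_cmp T1 T2 lt; set D := drop (size as1) as2 in E12.
have PD : pre D = a' by move: P2; rewrite E12 pre_cat P1 => /catLI.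
have HqD : walk_ok q (as1 ++ D) by move: Hq; rewrite E2 E12 walk_cat => /andP[].
exists D; split => //.
- by apply/eqP => D0; move: PD; rewrite D0 => /(congr1 size) /=; move: Ha; rewrite -size_eq0; lia.
- by move: HqD; rewrite walk_cat W1 => /andP[].
- by rewrite -{1}W1 -wend_cat -E12.
Qed.

Lemma CL p D (z y : seq S) : D != [::] -> walk_ok p D -> wend p D = p -> 0 < size y ->
  pre D ++ z = z ++ y -> cmem (CPC G) y.
Proof.
move=> HD Hw He Hy E.
have [t [k [Hk ED Hprim Ht]]] := root_ex HD.
rewrite ED in Hw He; have [Ht1 Ht2] := root_closed Ht Hk Hw He.
set x := post t.
have Ex : pre t ++ vlab p = vlab p ++ x by rewrite (L1 Ht1) Ht2.
have Epre : pre D = pw (pre t) k by rewrite ED pre_pw.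
have s1 : size (pre D) = size y by have := congr1 size E; rewrite !size_cat; lia.
have s2 : 0 < size (pre t) by move: s1; rewrite Epre size_pw; nia.
have s3 : size x = size (pre t) by have := congr1 size Ex; rewrite !size_cat; lia.
have [d _] : exists d : S, true by case: y Hy {E s1} => // d *; exists d.
have Cx : cmem (CPC G) x.
  exists (per d x); split.
    exists p, t, x; split; first by split.
    split; first by rewrite L0.
    by split; [rewrite s3 | exists 0%R => i; rewrite addr0; apply: per_d; rewrite s3].
  by split; [rewrite s3 | exists 0%R => i; rewrite addr0; apply: per_d; rewrite s3].
apply: (cmem_shift Hy _ Cx).
apply: (shiftrel_trans (shiftrel_sym (conj_shift Ex s2))).
apply: (shiftrel_trans (shiftrel_sym (shiftrel_pw Hk s2))).
by apply: (conj_shift (z := z)); rewrite -Epre ?E ?s1.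
Qed.

Lemma CPC_win c (s : seq S) (i0 : int) : CPC G c ->
  (forall j, j < size s -> c (i0 + Posz j)%R = nth (c 0%R) s j) ->
  exists q qs A B, [/\ walk_ok q qs, A != [::], B != [::] & vlab q ++ post qs = A ++ s ++ B].
Proof.
move=> [p [t [x [[[Ht [Hw He]] _] [Hl [Hx [k Hk]]]]]]] Hs.
have Ex : post t = x by move: Hl; rewrite L0 // => /catLI.
have [A [B [N [HA HB EN]]]] := WIN Hx Hk Hs.
have [Hw' _] := closed_pw N Hw He.
exists p, (pw t N), (vlab p ++ A), B; split => //.
  by move: HA; rewrite -!size_eq0 size_cat; lia.
by rewrite post_pw Ex EN catA.
Qed.

Lemma occ (y : seq S) : cmem (CPC G) y -> forall n,
  exists q qs A B, [/\ walk_ok q qs, A != [::], B != [::] & vlab q ++ post qs = A ++ pw y n ++ B].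
Proof.
move=> [c [Cc [Hy [k Hk]]]] n; apply: (CPC_win (i0 := k) Cc) => j hj.
rewrite addrC Hk; rewrite size_pw in hj.
by rewrite -/(per (c 0%R) y (Posz j)) per_nat nth_pw.
Qed.

Lemma walk_conductor p0 ps : walk_ok p0 ps -> conductor (CPC G) (wlabel p0 ps).
Proof.
move=> Hp; rewrite L0 //; set w := vlab p0 ++ post ps.
move=> a b Ha Hb [a' Ea] [b' Eb].
have sa : 0 < size a by rewrite lt0n size_eq0.
have sb : 0 < size b by rewrite lt0n size_eq0.
have pwsplit : forall y y', w ++ y = y' ++ w -> 0 < size y -> exists g, pw y (size w).+1 = g ++ w ++ y.
  move=> y y' E hy; have [g Eg] := suffix_pw E hy.
  by exists g; rewrite pwSr Eg catA.
have getD : forall y y', y != [::] -> w ++ y = y' ++ w -> cmem (CPC G) y ->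
    exists D, [/\ D != [::], walk_ok p0 D, wend p0 D = p0 & pre D = y'].
  move=> y y' Hy E Cy.
  have hy : 0 < size y by rewrite lt0n size_eq0.
  have [g Eg] := pwsplit y y' E hy.
  have [q [qs [A [B [Hq HA HB EL]]]]] := occ Cy (size w).+1.
  apply: (EX (q := q) (qs := qs) (ps := ps) (a := y) (A := A ++ g) (B := B)) => //.
  - by move: HA; rewrite -!size_eq0 size_cat; lia.
  - by rewrite EL Eg -!catA.
split.
- move=> Hab.
  have hab : 0 < size (a ++ b) by rewrite size_cat; lia.
  have Eab : w ++ (a ++ b) = (a' ++ b') ++ w by rewrite catA Ea -catA Eb catA.
  have [g Eg] := pwsplit _ _ Eab hab.
  have [q [qs [A [B [Hq HA HB EL]]]]] := occ Hab (size w).+1.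
  rewrite Eg in EL.
  split.
  + have [D [HD HwD HeD PD]] : exists D, [/\ D != [::], walk_ok p0 D, wend p0 D = p0 & pre D = a'].
      apply: (EX (q := q) (qs := qs) (ps := ps) (a := a) (A := A ++ g) (B := b ++ B)) => //.
      * by move: HA; rewrite -!size_eq0 size_cat; lia.
      * by move: Hb; rewrite -!size_eq0 size_cat; lia.
      * by rewrite EL -!catA.
    by apply: (CL (z := w) HD HwD HeD sa); rewrite PD Ea.
  + have [D [HD HwD HeD PD]] : exists D, [/\ D != [::], walk_ok p0 D, wend p0 D = p0 & pre D = b'].
      apply: (EX (q := q) (qs := qs) (ps := ps) (a := b) (A := A ++ g ++ a') (B := B)) => //.
      * by move: HA; rewrite -!size_eq0 !size_cat; lia.
      * rewrite EL -!catA; congr (_ ++ _); congr (_ ++ _).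
        by rewrite catA catA Ea -!catA.
    by apply: (CL (z := w) HD HwD HeD sb); rewrite PD Eb.
- move=> [Ca Cb].
  have [D [HD HwD HeD PD]] := getD a a' Ha Ea Ca.
  have [D' [HD' HwD' HeD' PD']] := getD b b' Hb Eb Cb.
  apply: (CL (p := p0) (z := w) (D := D ++ D')).
  - by move: HD; rewrite -!size_eq0 size_cat; lia.
  - by rewrite walk_cat HwD HeD HwD'.
  - by rewrite wend_cat HeD HeD'.
  - by rewrite size_cat; lia.
  - by rewrite pre_cat PD PD' -catA -Eb catA -Ea -catA.
Qed.

Lemma VL (s : seq S) qs q (A B : seq S) : walk_ok q qs -> vlab q ++ post qs = A ++ s ++ B ->
  (forall u : gV G, size (vlab u) <= size s) -> (forall e, size (elab e) <= size s) ->
  exists u : gV G, infix (vlab u) s.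
Proof.
move=> + + Hu He; elim: qs q A => [|e qs IH] q A Hq E.
  rewrite cats0 in E; have := congr1 size E; rewrite !size_cat => hs.
  have := Hu q => hq.
  have A0 : A = [::] by apply/eqP; rewrite -size_eq0; lia.
  have B0 : B = [::] by apply/eqP; rewrite -size_eq0; lia.
  by exists q; rewrite E A0 B0 cats0 infix_refl.
rewrite Lcons // in E; move: Hq => /andP[_ Hq].
case: (leqP (size (preE e)) (size A)) => h.
  have [r [EA Er]] := catsplit E h.
  exact: IH Hq Er.
have [r [Ep Es]] := catsplit (esym E) (ltnW h).
have hE := He e; rewrite edge_tgt size_cat Ep size_cat in hE.
have Es' : (r ++ vlab (gtgt e)) ++ post qs = s ++ B by rewrite -catA Es.
have le : size (r ++ vlab (gtgt e)) <= size s by rewrite size_cat; lia.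
have [r' [Es2 _]] := catsplit Es' le.
by exists (gtgt e); apply/infixP; exists r, r'; rewrite Es2 -catA.
Qed.

End Graph.

Section Generic.
Variable S : eqType.
Variable C : (int -> S) -> Prop.

Lemma cmem_conj (u v z : seq S) : u ++ z = z ++ v -> 0 < size u -> (cmem C u <-> cmem C v).
Proof.
move=> E hu.
have su : size u = size v by have := congr1 size E; rewrite !size_cat; lia.
have hv : 0 < size v by rewrite -su.
split; first exact: cmem_shift hv (conj_shift E hu).
exact: cmem_shift hu (shiftrel_sym (conj_shift E hu)).
Qed.

Lemma conductor_infix (v w : seq S) : conductor C v -> infix v w -> conductor C w.
Proof.
move=> Hv /infixP [p [q Ew]] a b Ha Hb [a' Ea] [b' Eb].
have key : forall x x', x != [::] -> w ++ x = x' ++ w ->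
    exists a3, [/\ q ++ x = a3 ++ q, (exists a4, v ++ a3 = a4 ++ v) & a3 != [::]].
  move=> x x' Hx E; rewrite Ew in E.
  have E1 : p ++ ((v ++ q) ++ x) = (x' ++ p) ++ (v ++ q) by rewrite -!catA; move: E; rewrite -!catA.
  have l1 : size p <= size (x' ++ p) by rewrite size_cat leq_addl.
  have [a2 [_ E2]] := catsplit E1 l1.
  have E3 : v ++ (q ++ x) = (a2 ++ v) ++ q by rewrite catA E2 -catA.
  have l2 : size v <= size (a2 ++ v) by rewrite size_cat leq_addl.
  have [a3 [E4 E5]] := catsplit E3 l2.
  exists a3; split => //; first by exists a2.
  by move: Hx; rewrite -!size_eq0; have := congr1 size E5; rewrite !size_cat; lia.
have [a3 [Ea3 Ea4 Ha3]] := key a a' Ha Ea.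
have [b3 [Eb3 Eb4 Hb3]] := key b b' Hb Eb.
have H := Hv a3 b3 Ha3 Hb3 Ea4 Eb4.
have sa : 0 < size a3 by rewrite lt0n size_eq0.
have sb : 0 < size b3 by rewrite lt0n size_eq0.
have sab : 0 < size (a3 ++ b3) by rewrite size_cat; lia.
have Eab : (a3 ++ b3) ++ q = q ++ (a ++ b) by rewrite -catA -Eb3 catA -Ea3 -catA.
rewrite -(cmem_conj Eab sab) -(cmem_conj (esym Ea3) sa) -(cmem_conj (esym Eb3) sb).
exact: H.
Qed.

Lemma sub_of_cmem (s a a' : seq S) : a != [::] -> s ++ a = a' ++ s -> cmem C a -> substr_of C s.
Proof.
move=> Ha E [c [Cc [Ha0 [k Hk]]]].
have [g Eg] := suffix_pw E Ha0.
have sz : size g + size s = size s * size a by rewrite -size_pw Eg size_cat.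
exists c; split => //; exists (k + Posz (size g))%R => j hj.
have -> : (k + Posz (size g) + Posz j = Posz (size g + j) + k)%R by lia.
rewrite Hk -/(per (c 0%R) a (Posz (size g + j))) per_nat -(@nth_pw _ _ _ (size s)); last by lia.
by rewrite Eg nth_cat ltnNge leq_addr /= addKn.
Qed.

Lemma conductor_nosub (s : seq S) : ~ substr_of C s -> conductor C s.
Proof.
move=> N a b Ha Hb [a' Ea] [b' Eb]; split.
  move=> Hab; exfalso; apply: N; apply: (sub_of_cmem (a := a ++ b) (a' := a' ++ b')) => //.
    by move: Ha; rewrite -!size_eq0 size_cat; lia.
  by rewrite catA Ea -catA Eb catA.
by move=> [Ca _]; exfalso; apply: N; exact: sub_of_cmem Ha Ea Ca.
Qed.

End Generic.

Theorem theorem5 (S : finType) (G : lgraph S) :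
  assembly_graph G -> non_redundant G ->
  (forall v w : seq S, conductor (CPC G) v -> infix v w -> conductor (CPC G) w) /\
  (forall x : gV G, conductor (CPC G) (vlab x)) /\
  (forall e : gE G, conductor (CPC G) (elab e)) /\
  (forall (v : gV G) (es : seq (gE G)), walk_ok v es -> conductor (CPC G) (wlabel v es)) /\
  (forall s : seq S, ~ substr_of (CPC G) s -> conductor (CPC G) s) /\
  (forall s : seq S, (max_edge_label G <= size s)%N -> conductor (CPC G) s).
Proof.
move=> [AG [Hv [He Hpe]]] NR.
have Hw := walk_conductor AG NR.
split; first by move=> v w; apply: conductor_infix.
split; first by move=> x; exact: (Hw x [::] isT).
split.
  move=> e; have := Hw (gsrc e) [:: e].
  by rewrite /wlabel /= eqxx cats0; apply.
split; first by [].
split; first by move=> s; apply: conductor_nosub.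
move=> s hs.
case: (classic (substr_of (CPC G) s)) => [Hsub | N]; last exact: conductor_nosub.
have [c [Cc [i Hi]]] := Hsub.
have [q [qs [A [B [Hq _ _ EL]]]]] := CPC_win AG Cc Hi.
have He' : forall e : gE G, size (elab e) <= size s.
  by move=> e; apply: (leq_trans _ hs); exact: (leq_bigmax (F := fun e => size (elab e)) e).
have Hu : forall u : gV G, size (vlab u) <= size s.
  move=> u; have [[|e es] [Hne [Hwk _]]] := Hv u => //.
  move: Hwk => /= /andP[/eqP <- _].
  case: (AG e) => /size_prefix h _; exact: leq_trans h (He' e).
have [u Hu'] := VL AG Hq EL Hu He'.
apply: conductor_infix Hu'; exact: (Hw u [::] isT).
Qed.
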